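(* Let $k_1<\tfrac12$. Let $J'=(z_w,z_w')$ be a nonempty open interval, let $r:J'\to\mathbb{R}$ be differentiable, and let $h:J'\to\mathbb{R}$ be differentiable with $\dot h(z)=1+h(z)^2-2r(z)h(z)$ on $J'$, having exactly one zero $z_*\in J'$. Let $G(z)=z-\dfrac{2h(z)}{2+h(z)^2-2r(z)h(z)}$ and $z_{n+1}=G(z_n)$. (1) If $r(z)>0$ and $\dot r(z)<k_1$ for all $z\in(z_w,z_* )$, then for every $z_0\in(z_w,z_* )$ the iterates are well defined and $(z_n)$ increases monotonically to $z_*$. (2) If $r(z)<0$ and $\dot r(z)<k_1$ for all $z\in(z_*,z_w')$, then for every $z_0\in(z_*,z_w')$ the iterates are well defined and $(z_n)$ decreases monotonically to $z_*$.
   Context: $\dot{}$ denotes differentiation with respect to $z$. Here $h<0$ on $(z_w,z_* )$ and $h>0$ on $(z_*,z_w')$. *)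

(* Defs.v *)
From Stdlib Require Import Reals.
Open Scope R_scope.

Definition Gden (r h : R -> R) (z : R) : R := 2 + h z ^ 2 - 2 * r z * h z.

Definition Gmap (r h : R -> R) (z : R) : R := z - 2 * h z / Gden r h z.

Definition Giter (r h : R -> R) (z0 : R) (n : nat) : R := Nat.iter n (Gmap r h) z0.

(* Main.v *)
Require Import Defs.
From Stdlib Require Import Reals.
From Stdlib Require Import Lra Psatz.
From Coquelicot Require Import Coquelicot.
Open Scope R_scope.

Definition Nf (r h dr : R -> R) z :=
  let a := h z ^ 2 in let b := - (r z) * h z in
  2*a + 3*a^2 + 8*a*b + 4*b^2 - 4 * dr z * a.

Lemma Gmap_deriv r h dr z :
  derivable_pt_lim r z (dr z) ->
  derivable_pt_lim h z (1 + h z ^ 2 - 2 * r z * h z) ->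
  Gden r h z <> 0 ->
  derivable_pt_lim (Gmap r h) z (Nf r h dr z / Gden r h z ^ 2).
Proof.
  intros Hr Hh HD.
  apply is_derive_Reals in Hr. apply is_derive_Reals in Hh.
  apply is_derive_Reals.
  unfold Gmap, Gden in *.
  auto_derive.
  - repeat split; try (eexists; eassumption). exact HD.
  - assert (E1: Derive (fun x : R => h x) z = 1 + h z ^ 2 - 2 * r z * h z) by exact (is_derive_unique _ _ _ Hh).
    assert (E2: Derive (fun x : R => r x) z = dr z) by exact (is_derive_unique _ _ _ Hr).
    rewrite E1, E2.
    unfold Nf. field. exact HD.
Qed.

Lemma Nf_pos r h dr z : h z <> 0 -> 0 < - r z * h z -> dr z < 1/2 -> 0 < Nf r h dr z.
Proof.
  intros H1 H2 H3. unfold Nf.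
  assert (Ha : 0 < h z ^ 2) by (rewrite <- Rsqr_pow2; apply Rsqr_pos_lt; auto).
  assert (0 < (1 - 2 * dr z) * h z ^ 2) by (apply Rmult_lt_0_compat; lra).
  nra.
Qed.

Lemma cont_of (r h : R -> R) z :
  derivable_pt_lim h z (1 + h z ^ 2 - 2 * r z * h z) -> continuity_pt h z.
Proof.
  intros H. apply derivable_continuous_pt. exists (1 + h z ^ 2 - 2 * r z * h z). exact H.
Qed.

Lemma h_sign (zw zw' zs : R) (r h : R -> R)
  (Hh : forall z, zw < z < zw' ->
          derivable_pt_lim h z (1 + h z ^ 2 - 2 * r z * h z))
  (Hzs : zw < zs < zw')
  (Hhzs : h zs = 0)
  (Huniq : forall z, zw < z < zw' -> h z = 0 -> z = zs) :
  (forall z, zw < z < zs -> h z < 0) /\ (forall z, zs < z < zw' -> 0 < h z).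
Proof.
  assert (Hd := Hh zs Hzs). rewrite Hhzs in Hd.
  destruct (Hd (1/2) ltac:(lra)) as [del Hdel].
  assert (Hdp := cond_pos del).
  assert (Hcont : forall x, zw < x < zw' -> continuity_pt h x)
    by (intros x Hx; exact (cont_of r h x (Hh x Hx))).
  split.
  - intros z Hz.
    set (d := Rmin (del/2) ((zs - z)/2)).
    assert (Hd1 : d <= del/2) by apply Rmin_l.
    assert (Hd2 : d <= (zs - z)/2) by apply Rmin_r.
    assert (Hd0 : 0 < d) by (apply Rmin_pos; lra).
    assert (Hq := Hdel (- d) ltac:(lra) ltac:(rewrite Rabs_Ropp, Rabs_pos_eq; lra)).
    apply Rabs_def2 in Hq. rewrite Hhzs in Hq.
    replace (1 + 0 ^ 2 - 2 * r zs * 0) with 1 in Hq by ring.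
    set (p := zs + - d) in *.
    assert (Hp : h p < 0).
    { set (q := (h p - 0) / - d) in *.
      assert (h p = - d * q) by (unfold q; field; lra). nra. }
    destruct (Rtotal_order (h z) 0) as [Hlt|[Heq|Hgt]]; [exact Hlt| |].
    + exfalso. assert (z = zs) by (apply Huniq; auto; lra). lra.
    + exfalso.
      destruct (Ranalysis5.IVT_interv (fun x => - h x) z p) as [x [Hx1 Hx2]].
      * intros a Ha. apply continuity_pt_opp. apply Hcont. unfold p in *; lra.
      * unfold p; lra.
      * lra.
      * lra.
      * assert (x = zs) by (apply Huniq; [unfold p in *; lra | lra]).
        unfold p in *; lra.
  - intros z Hz.
    set (d := Rmin (del/2) ((z - zs)/2)).
    assert (Hd1 : d <= del/2) by apply Rmin_l.
    assert (Hd2 : d <= (z - zs)/2) by apply Rmin_r.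
    assert (Hd0 : 0 < d) by (apply Rmin_pos; lra).
    assert (Hq := Hdel d ltac:(lra) ltac:(rewrite Rabs_pos_eq; lra)).
    apply Rabs_def2 in Hq. rewrite Hhzs in Hq.
    replace (1 + 0 ^ 2 - 2 * r zs * 0) with 1 in Hq by ring.
    set (p := zs + d) in *.
    assert (Hp : 0 < h p).
    { set (q := (h p - 0) / d) in *.
      assert (h p = d * q) by (unfold q; field; lra). nra. }
    destruct (Rtotal_order (h z) 0) as [Hlt|[Heq|Hgt]]; [| |exact Hgt].
    + exfalso.
      destruct (Ranalysis5.IVT_interv (fun x => - h x) p z) as [x [Hx1 Hx2]].
      * intros a Ha. apply continuity_pt_opp. apply Hcont. unfold p in *; lra.
      * unfold p; lra.
      * lra.
      * lra.
      * assert (x = zs) by (apply Huniq; [unfold p in *; lra | lra]).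
        unfold p in *; lra.
    + exfalso. assert (z = zs) by (apply Huniq; auto; lra). lra.
Qed.

Lemma Gmap_zs r h zs : h zs = 0 -> Gmap r h zs = zs.
Proof. intros H. unfold Gmap, Gden. rewrite H. field. Qed.

Lemma Gden_zs r h zs : h zs = 0 -> Gden r h zs = 2.
Proof. intros H. unfold Gden. rewrite H. ring. Qed.

Lemma step_left
  (k1 zw zw' zs : R) (r dr h : R -> R)
  (Hk1 : k1 < 1 / 2)
  (Hr : forall z, zw < z < zw' -> derivable_pt_lim r z (dr z))
  (Hh : forall z, zw < z < zw' ->
          derivable_pt_lim h z (1 + h z ^ 2 - 2 * r z * h z))
  (Hzs : zw < zs < zw')
  (Hhzs : h zs = 0)
  (Huniq : forall z, zw < z < zw' -> h z = 0 -> z = zs)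
  (HL : forall z, zw < z < zs -> 0 < r z /\ dr z < k1) :
  forall z, zw < z < zs -> 0 < Gden r h z /\ z < Gmap r h z < zs.
Proof.
  destruct (h_sign zw zw' zs r h Hh Hzs Hhzs Huniq) as [Hneg _].
  assert (HD : forall z, zw < z < zs -> 0 < Gden r h z).
  { intros z Hz. specialize (Hneg z Hz). destruct (HL z Hz).
    unfold Gden. nra. }
  intros z Hz. split; [auto|]. split.
  - specialize (HD z Hz). specialize (Hneg z Hz).
    assert (0 < / Gden r h z) by (apply Rinv_0_lt_compat; auto).
    unfold Gmap, Rdiv. nra.
  - destruct (MVT_cor2 (Gmap r h) (fun x => Nf r h dr x / Gden r h x ^ 2) z zs)
      as [c [Hc1 Hc2]].
    + lra.
    + intros c Hc. apply Gmap_deriv.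
      * apply Hr; lra.
      * apply Hh; lra.
      * destruct (Req_dec c zs) as [->|Hne].
        -- rewrite Gden_zs; auto; lra.
        -- assert (0 < Gden r h c) by (apply HD; lra). lra.
    + rewrite (Gmap_zs r h zs Hhzs) in Hc1.
      assert (Hcz : zw < c < zs) by lra.
      assert (HDc := HD c Hcz). specialize (Hneg c Hcz). destruct (HL c Hcz).
      assert (0 < Nf r h dr c) by (apply Nf_pos; [lra | nra | lra]).
      assert (0 < Nf r h dr c / Gden r h c ^ 2)
        by (apply Rdiv_lt_0_compat; auto; apply pow_lt; auto).
      nra.
Qed.

Lemma step_right
  (k1 zw zw' zs : R) (r dr h : R -> R)
  (Hk1 : k1 < 1 / 2)
  (Hr : forall z, zw < z < zw' -> derivable_pt_lim r z (dr z))
  (Hh : forall z, zw < z < zw' ->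
          derivable_pt_lim h z (1 + h z ^ 2 - 2 * r z * h z))
  (Hzs : zw < zs < zw')
  (Hhzs : h zs = 0)
  (Huniq : forall z, zw < z < zw' -> h z = 0 -> z = zs)
  (HR : forall z, zs < z < zw' -> r z < 0 /\ dr z < k1) :
  forall z, zs < z < zw' -> 0 < Gden r h z /\ zs < Gmap r h z < z.
Proof.
  destruct (h_sign zw zw' zs r h Hh Hzs Hhzs Huniq) as [_ Hpos].
  assert (HD : forall z, zs < z < zw' -> 0 < Gden r h z).
  { intros z Hz. specialize (Hpos z Hz). destruct (HR z Hz).
    unfold Gden. nra. }
  intros z Hz. split; [auto|]. split.
  - destruct (MVT_cor2 (Gmap r h) (fun x => Nf r h dr x / Gden r h x ^ 2) zs z)
      as [c [Hc1 Hc2]].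
    + lra.
    + intros c Hc. apply Gmap_deriv.
      * apply Hr; lra.
      * apply Hh; lra.
      * destruct (Req_dec c zs) as [->|Hne].
        -- rewrite Gden_zs; auto; lra.
        -- assert (0 < Gden r h c) by (apply HD; lra). lra.
    + rewrite (Gmap_zs r h zs Hhzs) in Hc1.
      assert (Hcz : zs < c < zw') by lra.
      assert (HDc := HD c Hcz). specialize (Hpos c Hcz). destruct (HR c Hcz).
      assert (0 < Nf r h dr c) by (apply Nf_pos; [lra | nra | lra]).
      assert (0 < Nf r h dr c / Gden r h c ^ 2)
        by (apply Rdiv_lt_0_compat; auto; apply pow_lt; auto).
      nra.
  - specialize (HD z Hz). specialize (Hpos z Hz).
    assert (0 < / Gden r h z) by (apply Rinv_0_lt_compat; auto).
    unfold Gmap, Rdiv. nra.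
Qed.

Lemma cv_bounds (u : nat -> R) L a b :
  Un_cv u L -> (forall n, a <= u n <= b) -> a <= L <= b.
Proof.
  intros HL Hb. split.
  - destruct (Rle_or_lt a L) as [H|H]; auto. exfalso.
    destruct (HL (a - L) ltac:(lra)) as [N HN].
    specialize (HN N (le_n N)). unfold R_dist in HN.
    destruct (Hb N). apply Rabs_def2 in HN. lra.
  - destruct (Rle_or_lt L b) as [H|H]; auto. exfalso.
    destruct (HL (L - b) ltac:(lra)) as [N HN].
    specialize (HN N (le_n N)). unfold R_dist in HN.
    destruct (Hb N). apply Rabs_def2 in HN. lra.
Qed.

Lemma cv_shift1 (u : nat -> R) L : Un_cv u L -> Un_cv (fun n => u (S n)) L.
Proof.
  intros HL eps He. destruct (HL eps He) as [N HN]. exists N.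
  intros n Hn. apply HN. lia.
Qed.

Lemma iter_left zw zs (G : R -> R)
  (HG : forall z, zw < z < zs -> z < G z < zs)
  (Hc : forall z, zw < z < zs -> continuity_pt G z) z0 (Hz0 : zw < z0 < zs) :
  (forall n, z0 <= Nat.iter n G z0 < zs) /\
  Un_growing (fun n => Nat.iter n G z0) /\ Un_cv (fun n => Nat.iter n G z0) zs.
Proof.
  set (u := fun n => Nat.iter n G z0).
  assert (Hb : forall n, z0 <= u n < zs).
  { induction n as [|n IH]; simpl; [lra|].
    assert (Hn : zw < u n < zs) by lra.
    destruct (HG _ Hn). unfold u in *. lra. }
  assert (Hg : Un_growing u).
  { intros n. assert (Hn : zw < u n < zs) by (destruct (Hb n); lra).
    destruct (HG _ Hn). simpl. unfold u in *. simpl. lra. }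
  split; [exact Hb|]. split; [exact Hg|].
  destruct (growing_cv u Hg) as [L HL].
  { exists zs. intros x [i ->]. destruct (Hb i); lra. }
  destruct (cv_bounds u L z0 zs HL) as [HL1 HL2].
  { intros n; destruct (Hb n); lra. }
  destruct (Rle_lt_or_eq_dec L zs HL2) as [Hlt|Heq].
  - exfalso. assert (HLr : zw < L < zs) by lra.
    assert (H1 := continuity_seq G u L (Hc L HLr) HL).
    assert (H2 := cv_shift1 u L HL).
    assert (G L = L) by (apply (UL_sequence (fun i => u (S i))); [exact H1 | exact H2]).
    destruct (HG L HLr). lra.
  - subst L. exact HL.
Qed.

Lemma iter_right zs zw' (G : R -> R)
  (HG : forall z, zs < z < zw' -> zs < G z < z)
  (Hc : forall z, zs < z < zw' -> continuity_pt G z) z0 (Hz0 : zs < z0 < zw') :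
  (forall n, zs < Nat.iter n G z0 <= z0) /\
  Un_decreasing (fun n => Nat.iter n G z0) /\ Un_cv (fun n => Nat.iter n G z0) zs.
Proof.
  set (u := fun n => Nat.iter n G z0).
  assert (Hb : forall n, zs < u n <= z0).
  { induction n as [|n IH]; simpl; [lra|].
    assert (Hn : zs < u n < zw') by lra.
    destruct (HG _ Hn). unfold u in *. lra. }
  assert (Hg : Un_decreasing u).
  { intros n. assert (Hn : zs < u n < zw') by (destruct (Hb n); lra).
    destruct (HG _ Hn). simpl. unfold u in *. simpl. lra. }
  split; [exact Hb|]. split; [exact Hg|].
  destruct (decreasing_cv u Hg) as [L HL].
  { exists (- zs). intros x [i ->]. unfold opp_seq. destruct (Hb i); lra. }
  destruct (cv_bounds u L zs z0 HL) as [HL1 HL2].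
  { intros n; destruct (Hb n); lra. }
  destruct (Rle_lt_or_eq_dec zs L HL1) as [Hlt|Heq].
  - exfalso. assert (HLr : zs < L < zw') by lra.
    assert (H1 := continuity_seq G u L (Hc L HLr) HL).
    assert (H2 := cv_shift1 u L HL).
    assert (G L = L) by (apply (UL_sequence (fun i => u (S i))); [exact H1 | exact H2]).
    destruct (HG L HLr). lra.
  - subst L. exact HL.
Qed.

Theorem theorem3p6
  (k1 zw zw' zs : R) (r dr h : R -> R)
  (Hk1 : k1 < 1 / 2)
  (Hint : zw < zw')
  (Hr : forall z, zw < z < zw' -> derivable_pt_lim r z (dr z))
  (Hh : forall z, zw < z < zw' ->
          derivable_pt_lim h z (1 + h z ^ 2 - 2 * r z * h z))
  (Hzs : zw < zs < zw')
  (Hhzs : h zs = 0)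
  (Huniq : forall z, zw < z < zw' -> h z = 0 -> z = zs) :
  ((forall z, zw < z < zs -> 0 < r z /\ dr z < k1) ->
     forall z0, zw < z0 < zs ->
       (forall n, zw < Giter r h z0 n < zw' /\ Gden r h (Giter r h z0 n) <> 0) /\
       Un_growing (Giter r h z0) /\ Un_cv (Giter r h z0) zs)
  /\
  ((forall z, zs < z < zw' -> r z < 0 /\ dr z < k1) ->
     forall z0, zs < z0 < zw' ->
       (forall n, zw < Giter r h z0 n < zw' /\ Gden r h (Giter r h z0 n) <> 0) /\
       Un_decreasing (Giter r h z0) /\ Un_cv (Giter r h z0) zs).
Proof.
  split.
  - intros HL z0 Hz0.
    assert (Hst := step_left k1 zw zw' zs r dr h Hk1 Hr Hh Hzs Hhzs Huniq HL).
    destruct (iter_left zw zs (Gmap r h)) with (z0 := z0) as [Hb [Hg Hcv]]; auto.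
    + intros z Hz. apply (Hst z Hz).
    + intros z Hz. apply derivable_continuous_pt.
      exists (Nf r h dr z / Gden r h z ^ 2). apply Gmap_deriv.
      * apply Hr; lra.
      * apply Hh; lra.
      * destruct (Hst z Hz). lra.
    + split; [|split; [exact Hg | exact Hcv]].
      intros n. destruct (Hb n). unfold Giter.
      assert (Hn : zw < Nat.iter n (Gmap r h) z0 < zs) by lra.
      destruct (Hst _ Hn). split; lra.
  - intros HR z0 Hz0.
    assert (Hst := step_right k1 zw zw' zs r dr h Hk1 Hr Hh Hzs Hhzs Huniq HR).
    destruct (iter_right zs zw' (Gmap r h)) with (z0 := z0) as [Hb [Hg Hcv]]; auto.
    + intros z Hz. apply (Hst z Hz).
    + intros z Hz. apply derivable_continuous_pt.
      exists (Nf r h dr z / Gden r h z ^ 2). apply Gmap_deriv.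
      * apply Hr; lra.
      * apply Hh; lra.
      * destruct (Hst z Hz). lra.
    + split; [|split; [exact Hg | exact Hcv]].
      intros n. destruct (Hb n). unfold Giter.
      assert (Hn : zs < Nat.iter n (Gmap r h) z0 < zw') by lra.
      destruct (Hst _ Hn). split; lra.
Qed.
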